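(* For the biased random transpositions walk with parameter $0<a\le 1$, and every $\varepsilon\in(0,1)$, setting $t_N=\lfloor (1-\varepsilon)\frac{1}{2a}N\log N\rfloor$, $$\lim_{N\to\infty}\ \frac12\sum_{\sigma\in S_N}\Big|P^{t_N}(\sigma)-\frac{1}{N!}\Big| = 1 .$$ More precisely, with $K=(N)^{\varepsilon/2}$ and $A_K$ the set of arrangements in which at least $K$ of the $a$-cards are in their original positions, $P^{t_N}(A_K)\to 1$ while $U(A_K)\to 0$, where $U$ is the uniform distribution on $S_N$.
   Context: Biased random transpositions walk: there are $N=2n$ cards. A fixed set of $n$ of them are called $a$-cards and have weight $p(c)=a$; the other $n$ are $b$-cards and have weight $p(c)=b$, where $0<a\le 1$ and $b=2-a$. At each step $t=1,2,\dots$ two cards $R_t$ and $L_t$ are chosen independently, each equal to a given card $c$ with probability $p(c)/N$, and the positions of $R_t$ and $L_t$ are exchanged (nothing happens if $R_t=L_t$). Starting from the identity arrangement, $P^t$ denotes the distribution on $S_N$ of the arrangement after $t$ steps. *)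

(* Defs.v *)
From Stdlib Require Import Reals.
From mathcomp Require Import all_boot all_fingroup.

Unset Strict Implicit.
Unset Printing Implicit Defensive.

Local Open Scope R_scope.

(* Cards are 'I_(2n); card c is initially at position c.  The a-cards are those
   with index < n, the b-cards those with index >= n. *)
Definition is_acard (n : nat) (c : 'I_(2 * n)) : bool := (c < n)%N.

Definition weight (a : R) (n : nat) (c : 'I_(2 * n)) : R :=
  if is_acard n c then a else 2 - a.

(* An arrangement s : {perm 'I_(2n)} maps each card to its position.
   One step: choose cards R,L independently with probabilities p(c)/N and
   exchange their positions: new arrangement is  x |-> s (tperm R L x),
   which in MathComp's composition convention ((p * q) x = q (p x)) is
   tperm R L * s. *)
Fixpoint Pt (a : R) (n : nat) (t : nat) : {perm 'I_(2 * n)} -> R :=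
  match t with
  | O => fun s => if s == 1%g then 1 else 0
  | S t' => fun s =>
      \big[Rplus/0]_(c : 'I_(2 * n)) \big[Rplus/0]_(d : 'I_(2 * n))
        (weight a n c / INR (2 * n)%N * (weight a n d / INR (2 * n)%N)
         * Pt a n t' (tperm c d * s)%g)
  end.

Definition tv_to_uniform (a : R) (n t : nat) : R :=
  / 2 * \big[Rplus/0]_(s : {perm 'I_(2 * n)})
          Rabs (Pt a n t s - / INR ((2 * n)`!)%N).

Definition floor_nat (x : R) : nat := Z.to_nat (Int_part x).

Definition tN (a eps : R) (n : nat) : nat :=
  floor_nat ((1 - eps) * / (2 * a) * INR (2 * n)%N * ln (INR (2 * n)%N)).

Definition fixed_acards (n : nat) (s : {perm 'I_(2 * n)}) : nat :=
  #|[set c : 'I_(2 * n) | is_acard n c && (s c == c)]|.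

Definition in_AK (K : R) (n : nat) (s : {perm 'I_(2 * n)}) : R :=
  if Rle_dec K (INR (fixed_acards n s)) then 1 else 0.

Definition Pt_AK (a K : R) (n t : nat) : R :=
  \big[Rplus/0]_(s : {perm 'I_(2 * n)}) (in_AK K n s * Pt a n t s).

Definition U_AK (K : R) (n : nat) : R :=
  \big[Rplus/0]_(s : {perm 'I_(2 * n)}) (in_AK K n s * / INR ((2 * n)`!)%N).

Definition KN (eps : R) (n : nat) : R := Rpower (INR (2 * n)%N) (eps / 2).

(* Main.v *)
Require Import Defs.
From Stdlib Require Import Reals Lra Lia.
From HB Require Import structures.
From mathcomp Require Import all_boot all_fingroup zify.
Local Open Scope R_scope.

Lemma RplusA_ : associative Rplus. Proof. move=> x y z; ring. Qed.
HB.instance Definition Rplus_comlaw :=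
  Monoid.isComLaw.Build R 0 Rplus RplusA_ Rplus_comm Rplus_0_l.

Lemma sumR_scal (I : Type) (r : seq I) (P : pred I) (F : I -> R) k :
  k * \big[Rplus/0]_(i <- r | P i) F i = \big[Rplus/0]_(i <- r | P i) (k * F i).
Proof.
apply: (big_morph (fun x => k * x)); first by move=> x y; ring.
ring.
Qed.

Lemma sumR_le (I : Type) (r : seq I) (P : pred I) (F G : I -> R) :
  (forall i, P i -> F i <= G i) ->
  \big[Rplus/0]_(i <- r | P i) F i <= \big[Rplus/0]_(i <- r | P i) G i.
Proof.
move=> H; apply: (big_ind2 (fun x y => x <= y)) => //.
- by apply: Rle_refl.
- by move=> x1 x2 y1 y2 h1 h2; apply: Rplus_le_compat.
Qed.

Lemma sumR_ge0 (I : Type) (r : seq I) (P : pred I) (F : I -> R) :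
  (forall i, P i -> 0 <= F i) -> 0 <= \big[Rplus/0]_(i <- r | P i) F i.
Proof.
move=> H; apply: (big_ind (fun x => 0 <= x)) => //.
- by apply: Rle_refl.
- by move=> x y hx hy; lra.
Qed.

Lemma sumR_INR (I : Type) (r : seq I) (P : pred I) (F : I -> nat) :
  INR (\sum_(i <- r | P i) F i) = \big[Rplus/0]_(i <- r | P i) INR (F i).
Proof.
apply: (big_morph INR) => //.
by move=> x y; rewrite plus_INR.
Qed.

Lemma iter_Rplus m x : iter m (Rplus x) 0 = INR m * x.
Proof.
elim: m => [|m IH]; first by rewrite /=; ring.
rewrite iterS IH S_INR; ring.
Qed.

Lemma sumR_const (I : finType) k : \big[Rplus/0]_(i : I) k = INR #|I| * k.
Proof. by rewrite big_const iter_Rplus cardE. Qed.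

Lemma card_set_R (I : finType) (P : pred I) :
  INR #|[set c | P c]| = \big[Rplus/0]_(c : I) (if P c then 1 else 0).
Proof.
rewrite -sum1_card big_mkcond sumR_INR; apply: eq_bigr => i _.
by rewrite inE; case: (P i).
Qed.

Lemma sumR_pred1 (I : finType) (c : I) (F : I -> R) :
  \big[Rplus/0]_(x : I) (if x == c then 0 else F x) = \big[Rplus/0]_x F x - F c.
Proof.
rewrite (bigD1 c) //= [in RHS](bigD1 c) //= eqxx.
have -> : \big[Rplus/0]_(i | i != c) (if i == c then 0 else F i) =
          \big[Rplus/0]_(i | i != c) F i.
  by apply: eq_bigr => i /negbTE ->.
ring.
Qed.

Lemma sumR_delta (I : finType) (c : I) (F : I -> R) :
  \big[Rplus/0]_(x : I) (if x == c then F x else 0) = F c.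
Proof.
rewrite (bigD1 c) //= eqxx big1; first ring.
by move=> i /negbTE ->.
Qed.

Lemma sum_half (n : nat) x y :
  \big[Rplus/0]_(c : 'I_(2 * n)) (if (c < n)%N then x else y) = INR n * x + INR n * y.
Proof.
pose F (i : nat) := if (i < n)%N then x else y.
have -> : \big[Rplus/0]_(c : 'I_(2 * n)) (if (c < n)%N then x else y) =
          \big[Rplus/0]_(c < 2 * n) F c by [].
rewrite -(big_mkord xpredT F) (big_cat_nat _ (n := n)) //=; last by lia.
rewrite (eq_big_nat _ _ (F2 := fun _ => x)); last first.
  by move=> i /andP [_ h]; rewrite /F h.
rewrite [X in _ + X](eq_big_nat _ _ (F2 := fun _ => y)); last first.
  by move=> i /andP [h _]; rewrite /F ltnNge h.
rewrite !big_const_nat !iter_Rplus.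
have -> : (2 * n - n = n)%N by lia.
by rewrite subn0.
Qed.

Definition ww (a : R) (n : nat) (c d : 'I_(2 * n)) : R :=
  weight a n c / INR (2 * n)%N * (weight a n d / INR (2 * n)%N).

Definition stepF (a : R) (n : nat)
  (f : {perm 'I_(2 * n)} -> {set 'I_(2 * n)} -> R) s T : R :=
  \big[Rplus/0]_(c : 'I_(2 * n)) \big[Rplus/0]_(d : 'I_(2 * n))
     (ww a n c d * f (tperm c d * s)%g (c |: (d |: T))).

Fixpoint Et (a : R) (n : nat) (t : nat)
  (f : {perm 'I_(2 * n)} -> {set 'I_(2 * n)} -> R) : R :=
  match t with
  | O => f 1%g set0
  | S t' => Et a n t' (stepF a n f)
  end.

Lemma Et_ext a n t f g : (forall s T, f s T = g s T) -> Et a n t f = Et a n t g.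
Proof.
elim: t f g => [|t IH] f g H /=; first by apply: H.
apply: IH => s T; rewrite /stepF; apply: eq_bigr => c _; apply: eq_bigr => d _.
by rewrite H.
Qed.

Lemma Et_add a n t f g :
  Et a n t (fun s T => f s T + g s T) = Et a n t f + Et a n t g.
Proof.
elim: t f g => [|t IH] f g //=.
rewrite -IH; apply: Et_ext => s T; rewrite /stepF -big_split /=.
apply: eq_bigr => c _; rewrite -big_split /=; apply: eq_bigr => d _; ring.
Qed.

Lemma Et_scal a n t k f :
  Et a n t (fun s T => k * f s T) = k * Et a n t f.
Proof.
elim: t f => [|t IH] f //=.
rewrite -IH; apply: Et_ext => s T; rewrite /stepF sumR_scal.
apply: eq_bigr => c _; rewrite sumR_scal; apply: eq_bigr => d _; ring.
Qed.

Lemma Et_sum a n t (I : Type) (r : seq I) (F : I -> {perm 'I_(2 * n)} -> {set 'I_(2 * n)} -> R) :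
  Et a n t (fun s T => \big[Rplus/0]_(i <- r) F i s T) =
  \big[Rplus/0]_(i <- r) Et a n t (F i).
Proof.
elim: r => [|i r IH].
  rewrite big_nil.
  rewrite (@Et_ext _ _ _ _ (fun s T => 0 * 0)); last by move=> s T; rewrite big_nil; ring.
  rewrite Et_scal; ring.
rewrite big_cons -IH -Et_add; apply: Et_ext => s T; by rewrite big_cons.
Qed.

Definition Inv (n : nat) (s : {perm 'I_(2 * n)}) (T : {set 'I_(2 * n)}) :=
  forall x, x \notin T -> s x = x.
Arguments Inv {n}.

Lemma weight_pos a n c : 0 < a -> a <= 1 -> 0 < weight a n c.
Proof. by rewrite /weight; case: (is_acard n c) => ? ?; lra. Qed.

Lemma ww_ge0 a n c d : (0 < n)%N -> 0 < a -> a <= 1 -> 0 <= ww a n c d.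
Proof.
move=> hn ha1 ha2; have hN : 0 < INR (2 * n) by apply: lt_0_INR; lia.
have := weight_pos a n c ha1 ha2; have := weight_pos a n d ha1 ha2.
rewrite /ww => h1 h2; apply: Rmult_le_pos; apply: Rlt_le; apply: Rdiv_lt_0_compat => //.
Qed.

Lemma Inv_step n (s : {perm 'I_(2 * n)}) T (c d : 'I_(2 * n)) : Inv s T -> Inv (tperm c d * s)%g (c |: (d |: T)).
Proof.
move=> H x; rewrite !inE negb_or => /andP [hc]; rewrite negb_or => /andP [hd hT].
rewrite permM tpermD; [by apply: H| by rewrite eq_sym | by rewrite eq_sym].
Qed.

Lemma Et_mono a n t f g : (0 < n)%N -> 0 < a -> a <= 1 ->
  (forall s T, Inv s T -> f s T <= g s T) -> Et a n t f <= Et a n t g.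
Proof.
move=> hn ha1 ha2; elim: t f g => [|t IH] f g H /=.
  by apply: H => x _; rewrite perm1.
apply: IH => s T hI; rewrite /stepF; apply: sumR_le => c _; apply: sumR_le => d _.
apply: Rmult_le_compat_l; first by apply: ww_ge0.
by apply: H; apply: Inv_step.
Qed.

Lemma sum_weight a n : \big[Rplus/0]_(c : 'I_(2 * n)) weight a n c = INR (2 * n).
Proof.
rewrite /weight /is_acard sum_half mult_INR /=; ring.
Qed.

Lemma sum_weightN a n : (0 < n)%N ->
  \big[Rplus/0]_(c : 'I_(2 * n)) (weight a n c / INR (2 * n)) = 1.
Proof.
move=> hn; have hN : INR (2 * n) <> 0 by apply: not_0_INR; lia.
have -> : \big[Rplus/0]_(c : 'I_(2 * n)) (weight a n c / INR (2 * n)) =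
          / INR (2 * n) * \big[Rplus/0]_(c : 'I_(2 * n)) weight a n c.
  by rewrite sumR_scal; apply: eq_bigr => c _; rewrite /Rdiv Rmult_comm.
rewrite sum_weight; field; exact hN.
Qed.

Lemma sum_ww a n : (0 < n)%N ->
  \big[Rplus/0]_(c : 'I_(2 * n)) \big[Rplus/0]_(d : 'I_(2 * n)) ww a n c d = 1.
Proof.
move=> hn.
have -> : \big[Rplus/0]_(c : 'I_(2 * n)) \big[Rplus/0]_(d : 'I_(2 * n)) ww a n c d =
   \big[Rplus/0]_(c : 'I_(2 * n)) (weight a n c / INR (2 * n) * 1).
  apply: eq_bigr => c _; rewrite -(sum_weightN a n hn) sumR_scal.
  by apply: eq_bigr.
rewrite -[RHS](sum_weightN a n hn); apply: eq_bigr => c _; ring.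
Qed.

Lemma Et_const a n t k : (0 < n)%N -> Et a n t (fun _ _ => k) = k.
Proof.
move=> hn; elim: t => [|t IH] //=.
rewrite -[RHS]IH; apply: Et_ext => s T; rewrite /stepF.
rewrite -[RHS](Rmult_1_l k) -(sum_ww a n hn).
rewrite Rmult_comm sumR_scal; apply: eq_bigr => c _.
rewrite sumR_scal; apply: eq_bigr => d _; ring.
Qed.

Lemma Et_Pt a n t (g : {perm 'I_(2 * n)} -> R) :
  Et a n t (fun s _ => g s) = \big[Rplus/0]_(s : {perm 'I_(2 * n)}) (Pt a n t s * g s).
Proof.
elim: t g => [|t IH] g /=.
  rewrite (bigD1 1%g) //= eqxx big1; first by ring_simplify.
  idtac.
  by move=> s /negbTE ->; ring.
rewrite /stepF IH.
transitivity (\big[Rplus/0]_(c : 'I_(2 * n)) \big[Rplus/0]_(d : 'I_(2 * n))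
   \big[Rplus/0]_(s : {perm 'I_(2 * n)}) (ww a n c d * (Pt a n t s * g (tperm c d * s)%g))).
  transitivity (\big[Rplus/0]_(s : {perm 'I_(2 * n)}) \big[Rplus/0]_(c : 'I_(2 * n))
   \big[Rplus/0]_(d : 'I_(2 * n)) (ww a n c d * (Pt a n t s * g (tperm c d * s)%g))).
    apply: eq_bigr => s _; rewrite sumR_scal; apply: eq_bigr => c _.
    rewrite sumR_scal; apply: eq_bigr => d _; ring.
  rewrite exchange_big; apply: eq_bigr => c _.
  by rewrite exchange_big.
symmetry.
transitivity (\big[Rplus/0]_(s : {perm 'I_(2 * n)}) \big[Rplus/0]_(c : 'I_(2 * n))
   \big[Rplus/0]_(d : 'I_(2 * n)) (ww a n c d * Pt a n t (tperm c d * s)%g * g s)).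
  apply: eq_bigr => s _; rewrite Rmult_comm sumR_scal; apply: eq_bigr => c _.
  rewrite sumR_scal; apply: eq_bigr => d _; rewrite /ww; ring.
rewrite exchange_big; apply: eq_bigr => c _.
rewrite exchange_big; apply: eq_bigr => d _.
rewrite (reindex_inj (mulgI (tperm c d))) /=.
apply: eq_bigr => s _; rewrite mulgA tperm2 mul1g Rmult_assoc.
reflexivity.
Qed.

Lemma forall_setU1 (I : finType) (h : pred I) c (T : {set I}) :
  [forall x, (x \in c |: T) ==> h x] = h c && [forall x, (x \in T) ==> h x].
Proof.
apply/idP/idP.
  move/forallP => H; apply/andP; split.
    by have := H c; rewrite !inE eqxx.
  apply/forallP => x; apply/implyP => xT.
  have /implyP := H x; apply; by rewrite inE xT orbT.
move/andP => [hc /forallP H]; apply/forallP => x.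
rewrite !inE; apply/implyP => /orP [/eqP->//|xT].
by have /implyP := H x; apply.
Qed.

Definition wN a n (c : 'I_(2 * n)) := weight a n c / INR (2 * n).

Lemma Et_avoid a n t (h : pred 'I_(2 * n)) : (0 < n)%N ->
  Et a n t (fun _ T => if [forall x, (x \in T) ==> ~~ h x] then 1 else 0) =
  (\big[Rplus/0]_(c : 'I_(2 * n)) (if h c then 0 else wN a n c)) ^ (2 * t).
Proof.
move=> hn; set q := \big[Rplus/0]_(c : 'I_(2 * n)) _.
elim: t => [|t IH] /=.
  have -> : [forall x : 'I_(2 * n), (x \in set0) ==> ~~ h x].
    by apply/forallP => x; rewrite inE.
  by [].
rewrite (@Et_ext _ _ _ _ (fun s T => (q * q) *
      (if [forall x, (x \in T) ==> ~~ h x] then 1 else 0))); last first.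
  move=> s T; rewrite /stepF /q Rmult_assoc Rmult_comm sumR_scal.
  rewrite Rmult_comm sumR_scal; apply: eq_bigr => c _.
  rewrite Rmult_comm !sumR_scal; apply: eq_bigr => d _.
  rewrite !forall_setU1 /ww /wN.
  case: (h c); case: (h d); case: [forall x, _] => /=; ring.
rewrite Et_scal IH.
have -> : (t + 1 * t.+1)%coq_nat = (2 * t).+1 by lia.
rewrite /=; ring.
Qed.

Definition Ucard n (c : 'I_(2 * n)) (T : {set 'I_(2 * n)}) : R :=
  if c \in T then 0 else 1.
Arguments Ucard {n}.

Definition Yst n (T : {set 'I_(2 * n)}) : R :=
  \big[Rplus/0]_(c : 'I_(2 * n)) (if is_acard n c then Ucard c T else 0).
Arguments Yst {n}.

Lemma Ucard_forall n (c : 'I_(2 * n)) T :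
  Ucard c T = if [forall x, (x \in T) ==> ~~ (x == c)] then 1 else 0.
Proof.
rewrite /Ucard; case: (boolP (c \in T)) => hc.
  suff -> : [forall x, (x \in T) ==> ~~ (x == c)] = false by [].
  apply/negbTE/forallP => H; move: (H c); by rewrite hc eqxx.
suff -> : [forall x, (x \in T) ==> ~~ (x == c)] by [].
apply/forallP => x; apply/implyP => xT; apply/eqP => e; by rewrite -e xT in hc.
Qed.

Lemma sum_wN a n : (0 < n)%N -> \big[Rplus/0]_(c : 'I_(2 * n)) wN a n c = 1.
Proof. exact: sum_weightN. Qed.

Definition q1 a n := 1 - a / INR (2 * n).

Lemma Et_U a n t (c : 'I_(2 * n)) : (0 < n)%N -> is_acard n c ->
  Et a n t (fun _ T => Ucard c T) = q1 a n ^ (2 * t).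
Proof.
move=> hn hc.
rewrite (@Et_ext _ _ _ _ (fun _ T => if [forall x, (x \in T) ==> ~~ (x == c)] then 1 else 0));
  last by move=> s T; rewrite Ucard_forall.
rewrite Et_avoid // sumR_pred1 sum_wN // /wN /weight hc.
by [].
Qed.

Lemma Et_zero a n t : (0 < n)%N -> Et a n t (fun _ _ => 0) = 0.
Proof. move=> hn; exact: Et_const. Qed.

Lemma EY a n t : (0 < n)%N ->
  Et a n t (fun _ T => Yst T) = INR n * q1 a n ^ (2 * t).
Proof.
move=> hn; rewrite /Yst Et_sum.
rewrite (eq_bigr (fun c : 'I_(2 * n) => if (c < n)%N then q1 a n ^ (2 * t) else 0)).
  by rewrite sum_half; ring.
move=> c _; rewrite /is_acard; case: (boolP (c < n)%N) => hc.
  by apply: Et_U.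
exact: Et_zero.
Qed.

Lemma forall_pair (I : finType) (c d : I) (T : {set I}) :
  [forall x, (x \in T) ==> ~~ ((x == c) || (x == d))] = (c \notin T) && (d \notin T).
Proof.
apply/idP/idP.
  move/forallP => H; apply/andP; split.
    by apply/negP => cT; have := H c; rewrite cT eqxx.
  by apply/negP => dT; have := H d; rewrite dT eqxx orbT.
move/andP => [cT dT]; apply/forallP => x; apply/implyP => xT.
apply/negP => /orP [/eqP e|/eqP e]; subst x; by rewrite xT in cT dT.
Qed.

Lemma INR_n_ge1 n : (0 < n)%N -> 1 <= INR n.
Proof. move=> hn; apply: (le_INR 1); lia. Qed.

Lemma INR_2n n : INR (2 * n) = 2 * INR n.
Proof. by rewrite mult_INR. Qed.

Lemma q1_bounds a n : (0 < n)%N -> 0 < a -> a <= 1 -> 1/2 <= q1 a n <= 1.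
Proof.
move=> hn ha1 ha2; have h1 := INR_n_ge1 n hn; rewrite /q1 INR_2n.
have : a / (2 * INR n) <= 1/2.
  apply: (Rmult_le_reg_r (2 * INR n)); first lra.
  by field_simplify; lra.
have : 0 <= a / (2 * INR n) by apply: Rlt_le; apply: Rdiv_lt_0_compat; lra.
lra.
Qed.

Lemma Et_UU a n t (c d : 'I_(2 * n)) : (0 < n)%N -> 0 < a -> a <= 1 ->
  is_acard n c -> is_acard n d -> c != d ->
  Et a n t (fun _ T => Ucard c T * Ucard d T) <= q1 a n ^ (2 * t) * q1 a n ^ (2 * t).
Proof.
move=> hn ha1 ha2 hc hd cd.
rewrite (@Et_ext _ _ _ _ (fun _ T => if [forall x, (x \in T) ==> ~~ ((x == c) || (x == d))] then 1 else 0)); last first.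
  by move=> s T; rewrite forall_pair /Ucard; case: (c \in T); case: (d \in T) => /=; ring.
rewrite Et_avoid //.
rewrite (eq_bigr (fun x => if x == c then 0 else (if x == d then 0 else wN a n x))); last first.
  by move=> x _; case: (x == c); case: (x == d).
rewrite sumR_pred1 sumR_pred1 sum_wN // (negbTE cd) /wN /weight hc hd.
rewrite -Rpow_mult_distr; apply: pow_incr.
have h1 := INR_n_ge1 n hn; have := q1_bounds a n hn ha1 ha2; rewrite /q1 => hq.
set x := a / INR (2 * n) in hq *.
split; nra.
Qed.

Definition Yc n (c : 'I_(2 * n)) (T : {set 'I_(2 * n)}) : R :=
  if is_acard n c then Ucard c T else 0.
Arguments Yc {n}.

Lemma EY2 a n t : (0 < n)%N -> 0 < a -> a <= 1 ->
  Et a n t (fun _ T => Yst T * Yst T) <=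
  INR n * q1 a n ^ (2 * t) + (INR n * q1 a n ^ (2 * t)) * (INR n * q1 a n ^ (2 * t)).
Proof.
move=> hn ha1 ha2.
set m1 := q1 a n ^ (2 * t).
have m1ge0 : 0 <= m1 by apply: pow_le; have := q1_bounds a n hn ha1 ha2; lra.
rewrite (@Et_ext _ _ _ _ (fun _ T => \big[Rplus/0]_(c : 'I_(2 * n))
           \big[Rplus/0]_(d : 'I_(2 * n)) (Yc c T * Yc d T))); last first.
  move=> s T; rewrite {1}/Yst Rmult_comm sumR_scal; apply: eq_bigr => c _.
  by rewrite Rmult_comm /Yst sumR_scal; apply: eq_bigr => d _.
rewrite Et_sum.
rewrite (eq_bigr (fun c : 'I_(2 * n) => \big[Rplus/0]_(d : 'I_(2 * n))
   Et a n t (fun _ T => Yc c T * Yc d T))); last by move=> c _; rewrite Et_sum.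
apply: (Rle_trans _ (\big[Rplus/0]_(c : 'I_(2 * n)) \big[Rplus/0]_(d : 'I_(2 * n))
   (if is_acard n c && is_acard n d then (if d == c then m1 else 0) + m1 * m1 else 0))).
  apply: sumR_le => c _; apply: sumR_le => d _.
  rewrite /Yc; case: (boolP (is_acard n c)) => hc; case: (boolP (is_acard n d)) => hd /=;
    try by rewrite (@Et_ext _ _ _ _ (fun _ _ => 0)); [rewrite Et_zero //; apply: Rle_refl | move=> s T; ring].
  case: (boolP (d == c)) => [/eqP e|dc].
    subst d.
    rewrite (@Et_ext _ _ _ _ (fun _ T => Ucard c T)); last first.
      by move=> s T; rewrite /Ucard; case: (c \in T); ring.
    rewrite Et_U //; rewrite -/m1; nra.
  have := Et_UU a n t c d hn ha1 ha2 hc hd; rewrite eq_sym dc => /(_ isT); rewrite -/m1; lra.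
rewrite (eq_bigr (fun c : 'I_(2 * n) => if (c < n)%N then m1 + INR n * (m1 * m1) else 0)).
  rewrite sum_half; apply: Req_le; ring.
move=> c _; rewrite /is_acard; case: (boolP (c < n)%N) => hc /=.
  rewrite (eq_bigr (fun d : 'I_(2 * n) => (if d == c then m1 else 0) + (if (d < n)%N then m1 * m1 else 0))).
    by rewrite big_split /= sumR_delta sum_half; ring.
  move=> d _; case: (boolP (d == c)) => [/eqP e|dc]; first by subst d; rewrite hc.
  by case: (d < n)%N; ring.
by rewrite big1.
Qed.

Lemma Cheb a n t K : (0 < n)%N -> 0 < a -> a <= 1 ->
  K < INR n * q1 a n ^ (2 * t) ->
  Et a n t (fun _ T => if Rlt_dec (Yst T) K then 1 else 0) <=
  INR n * q1 a n ^ (2 * t) / ((INR n * q1 a n ^ (2 * t) - K) ^ 2).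
Proof.
move=> hn ha1 ha2; set mu := INR n * q1 a n ^ (2 * t) => hK.
set D := (mu - K) ^ 2.
have hD : 0 < D by rewrite /D; apply: pow_lt; lra.
apply: (Rle_trans _ (Et a n t (fun _ T => / D * (Yst T * Yst T + ((-2 * mu) * Yst T + mu * mu))))).
  apply: Et_mono => // s T _.
  case: Rlt_dec => hY /=.
    have : D <= Yst T * Yst T + (-2 * mu * Yst T + mu * mu).
      have h1 : 0 < mu - K by lra.
      have h2 : mu - K < mu - Yst T by lra.
      have := Rmult_le_compat _ _ _ _ (Rlt_le _ _ h1) (Rlt_le _ _ h1) (Rlt_le _ _ h2) (Rlt_le _ _ h2).
      rewrite /D /=; nra.
    move=> h; have hi : 0 < / D by apply: Rinv_0_lt_compat.
    have : / D * D <= / D * (Yst T * Yst T + (-2 * mu * Yst T + mu * mu)).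
      by apply: Rmult_le_compat_l; lra.
    rewrite Rinv_l; [move=> hh | by apply: Rgt_not_eq]. lra.
  have hi : 0 < / D by apply: Rinv_0_lt_compat.
  have := pow2_ge_0 (Yst T - mu); move=> hsq; apply: Rmult_le_pos; [lra | nra].
rewrite Et_scal Et_add Et_add Et_scal Et_const // EY //.
have := EY2 a n t hn ha1 ha2; rewrite -/mu => h.
have hi : 0 < / D by apply: Rinv_0_lt_compat.
rewrite /Rdiv (Rmult_comm mu); apply: Rmult_le_compat_l; lra.
Qed.

Lemma Yst_le_fixed n (s : {perm 'I_(2 * n)}) T : Inv s T -> Yst T <= INR (fixed_acards n s).
Proof.
move=> H; rewrite /fixed_acards card_set_R /Yst; apply: sumR_le => c _.
case: (is_acard n c) => /=; last by apply: Rle_refl.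
rewrite /Ucard; case: (boolP (c \in T)) => cT.
  by case: (s c == c); lra.
by rewrite (H c cT) eqxx; apply: Rle_refl.
Qed.

Lemma Pt_AK_Et a K n t :
  Pt_AK a K n t = Et a n t (fun s _ => in_AK K n s).
Proof. by rewrite Et_Pt /Pt_AK; apply: eq_bigr => s _; rewrite Rmult_comm. Qed.

Lemma Pt_AK_lower a n t K : (0 < n)%N -> 0 < a -> a <= 1 ->
  K < INR n * q1 a n ^ (2 * t) ->
  1 - INR n * q1 a n ^ (2 * t) / ((INR n * q1 a n ^ (2 * t) - K) ^ 2) <= Pt_AK a K n t.
Proof.
move=> hn ha1 ha2 hK; have := Cheb a n t K hn ha1 ha2 hK.
set B := _ / _ => hB.
rewrite Pt_AK_Et.
apply: (Rle_trans _ (Et a n t (fun _ T => 1 + -1 * (if Rlt_dec (Yst T) K then 1 else 0)))).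
  by rewrite Et_add Et_const // Et_scal; lra.
apply: Et_mono => // s T hI.
rewrite /in_AK; case: Rlt_dec => hY /=.
  by case: Rle_dec => _ /=; lra.
have := Yst_le_fixed n s T hI; case: Rle_dec => h /= hh; lra.
Qed.

Lemma Pt_ge0 a n t s : (0 < n)%N -> 0 < a -> a <= 1 -> 0 <= Pt a n t s.
Proof.
move=> hn ha1 ha2; elim: t s => [|t IH] s /=.
  by case: (s == 1%g); lra.
apply: sumR_ge0 => c _; apply: sumR_ge0 => d _.
apply: Rmult_le_pos; [exact: ww_ge0 | exact: IH].
Qed.

Lemma Pt_sum a n t : (0 < n)%N ->
  \big[Rplus/0]_(s : {perm 'I_(2 * n)}) Pt a n t s = 1.
Proof.
move=> hn; have := Et_Pt a n t (fun _ => 1); rewrite Et_const // => ->.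
by apply: eq_bigr => s _; ring.
Qed.

Lemma Pt_AK_le1 a n t K : (0 < n)%N -> 0 < a -> a <= 1 -> Pt_AK a K n t <= 1.
Proof.
move=> hn ha1 ha2; rewrite Pt_AK_Et -[X in _ <= X](Et_const a n t 1 hn).
apply: Et_mono => // s T _; rewrite /in_AK; case: Rle_dec => _ /=; lra.
Qed.

Lemma perm_count_d n (c d : 'I_(2 * n)) :
  \big[Rplus/0]_(s : {perm 'I_(2 * n)}) (if s c == d then 1 else 0) =
  \big[Rplus/0]_(s : {perm 'I_(2 * n)}) (if s c == c then 1 else 0).
Proof.
rewrite (reindex_inj (mulIg (tperm c d))) /=.
apply: eq_bigr => s _; rewrite permM.
have -> : (tperm c d (s c) == d) = (tperm c d (s c) == tperm c d c) by rewrite tpermL.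
by rewrite (inj_eq perm_inj).
Qed.

Lemma fact_pos n : 0 < INR (n`!).
Proof. apply: lt_0_INR; have := fact_gt0 n; lia. Qed.

Lemma perm_count n (c : 'I_(2 * n)) : (0 < n)%N ->
  \big[Rplus/0]_(s : {perm 'I_(2 * n)}) (if s c == c then 1 else 0) =
  INR ((2 * n)`!) / INR (2 * n).
Proof.
move=> hn; have hN : 0 < INR (2 * n) by apply: lt_0_INR; lia.
set S := \big[Rplus/0]_(s : {perm 'I_(2 * n)}) _.
have : \big[Rplus/0]_(d : 'I_(2 * n)) \big[Rplus/0]_(s : {perm 'I_(2 * n)})
          (if s c == d then 1 else 0) = INR ((2 * n)`!).
  rewrite exchange_big /=.
  rewrite (eq_bigr (fun _ => 1)); last first.
    move=> s _; rewrite (eq_bigr (fun d => if d == s c then 1 else 0)).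
      by rewrite sumR_delta.
    by move=> d _; rewrite eq_sym.
  by rewrite sumR_const card_Sn; ring.
rewrite (eq_bigr (fun _ => S)); last by move=> d _; rewrite perm_count_d.
rewrite sumR_const card_ord => h.
apply: (Rmult_eq_reg_l (INR (2 * n))); last lra.
rewrite h; field; lra.
Qed.

Lemma U_AK_upper K n : (0 < n)%N -> 0 < K -> 0 <= U_AK K n <= / (2 * K).
Proof.
move=> hn hK; have hN : 0 < INR (2 * n) by apply: lt_0_INR; lia.
have hF := fact_pos (2 * n).
have hFi : 0 < / INR ((2 * n)`!) by apply: Rinv_0_lt_compat.
split.
  apply: sumR_ge0 => s _; apply: Rmult_le_pos; last lra.
  by rewrite /in_AK; case: Rle_dec => _ /=; lra.
apply: (Rle_trans _ (\big[Rplus/0]_(s : {perm 'I_(2 * n)})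
           (/ K * / INR ((2 * n)`!) * INR (fixed_acards n s)))).
  apply: sumR_le => s _.
  have hX : 0 <= INR (fixed_acards n s) by apply: pos_INR.
  rewrite /in_AK; case: Rle_dec => h /=.
    have : 1 <= / K * INR (fixed_acards n s).
      rewrite -(Rinv_l K); last lra.
      apply: Rmult_le_compat_l => //; apply: Rlt_le; apply: Rinv_0_lt_compat; lra.
    have hKi : 0 < / K by apply: Rinv_0_lt_compat.
    nra.
  have hKi : 0 < / K by apply: Rinv_0_lt_compat.
  rewrite Rmult_0_l; apply: Rmult_le_pos; [|lra]; apply: Rmult_le_pos; lra.
rewrite -sumR_scal.
have -> : \big[Rplus/0]_(s : {perm 'I_(2 * n)}) INR (fixed_acards n s) =
          INR ((2 * n)`!) / 2.
  rewrite (eq_bigr (fun s : {perm 'I_(2 * n)} => \big[Rplus/0]_(c : 'I_(2 * n))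
            (if (c < n)%N then (if s c == c then 1 else 0) else 0))); last first.
    move=> s _; rewrite /fixed_acards card_set_R; apply: eq_bigr => c _.
    by rewrite /is_acard; case: (c < n)%N.
  rewrite exchange_big /=.
  rewrite (eq_bigr (fun c : 'I_(2 * n) => if (c < n)%N then INR ((2 * n)`!) / INR (2 * n) else 0)).
    rewrite sum_half INR_2n; field; have := INR_n_ge1 n hn; lra.
  move=> c _; case: (c < n)%N; first by rewrite perm_count.
  by rewrite big1.
apply: Req_le; field; lra.
Qed.

Lemma tv_upper a n t : (0 < n)%N -> 0 < a -> a <= 1 -> tv_to_uniform a n t <= 1.
Proof.
move=> hn ha1 ha2; have hF := fact_pos (2 * n).
have hFi : 0 < / INR ((2 * n)`!) by apply: Rinv_0_lt_compat.
rewrite /tv_to_uniform.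
apply: (Rle_trans _ (/ 2 * \big[Rplus/0]_(s : {perm 'I_(2 * n)})
            (Pt a n t s + / INR ((2 * n)`!)))).
  apply: Rmult_le_compat_l; first lra.
  apply: sumR_le => s _; have := Pt_ge0 a n t s hn ha1 ha2.
  move=> h; unfold Rabs; case: Rcase_abs => hh; lra.
rewrite big_split /= Pt_sum // sumR_const card_Sn Rinv_r; last lra.
lra.
Qed.

Lemma tv_lower a n t K : (0 < n)%N -> 0 < a -> a <= 1 ->
  Pt_AK a K n t - U_AK K n <= tv_to_uniform a n t.
Proof.
move=> hn ha1 ha2; have hF := fact_pos (2 * n).
set u := / INR ((2 * n)`!).
rewrite /tv_to_uniform.
have key : \big[Rplus/0]_(s : {perm 'I_(2 * n)})
     ((2 * in_AK K n s - 1) * (Pt a n t s - u)) =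
   2 * Pt_AK a K n t - 2 * U_AK K n.
  rewrite (eq_bigr (fun s => 2 * (in_AK K n s * Pt a n t s) + (-2 * (in_AK K n s * u)
             + (-1 * Pt a n t s + u)))); last by move=> s _; ring.
  rewrite !big_split /= -!sumR_scal Pt_sum // sumR_const card_Sn.
  rewrite /Pt_AK /U_AK /u Rinv_r; last lra.
  set A := \big[Rplus/0]_i (in_AK K n i * Pt a n t i).
  set B := \big[Rplus/0]_i (in_AK K n i * / INR (2 * n)`!).
  ring.
apply: (Rle_trans _ (/ 2 * \big[Rplus/0]_(s : {perm 'I_(2 * n)})
     ((2 * in_AK K n s - 1) * (Pt a n t s - u)))); first by rewrite key; lra.
apply: Rmult_le_compat_l; first lra.
apply: sumR_le => s _; rewrite /in_AK; case: Rle_dec => _ /=;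
  rewrite /u; unfold Rabs; case: Rcase_abs => hh; lra.
Qed.

Lemma floor_nat_le y : 0 <= y -> INR (floor_nat y) <= y.
Proof.
move=> hy; rewrite /floor_nat INR_IZR_INZ.
have [h1 _] := base_Int_part y.
case: (Z.le_gt_cases 0 (Int_part y)) => h.
  by rewrite Znat.Z2Nat.id.
have -> : Z.to_nat (Int_part y) = 0%nat by lia.
by rewrite /=.
Qed.

Lemma ln_le_xm1 x : 0 < x -> ln x <= x - 1.
Proof. move=> hx; have := exp_ineq1_le (ln x); rewrite exp_ln //; lra. Qed.

Lemma ln_ge_of_exp x z : 0 < x -> exp z <= x -> z <= ln x.
Proof.
move=> hx h; apply: Rnot_lt_le => hl.
have := exp_increasing _ _ hl; rewrite exp_ln //; lra.
Qed.

Lemma exp2_le9 : exp 2 <= 9.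
Proof.
have -> : 2 = 1 + 1 by ring.
rewrite exp_plus; have := exp_le_3; have := exp_pos 1; nra.
Qed.

Lemma mu_lower a eps n : (0 < n)%N -> 0 < a -> a <= 1 -> 0 < eps -> eps < 1 ->
  KN eps n * KN eps n / 18 <= INR n * q1 a n ^ (2 * tN a eps n).
Proof.
move=> hn ha1 ha2 he1 he2.
have hn1 := INR_n_ge1 n hn.
set N := INR (2 * n).
have hN : N = 2 * INR n by rewrite /N INR_2n.
have hNp : 0 < N by lra.
set L := ln N.
have hL0 : 0 <= L by apply: ln_ge_of_exp => //; rewrite exp_0; lra.
have hLN : L <= N by have := ln_le_xm1 N hNp; rewrite -/L; lra.
set t := tN a eps n.
have ht : INR t <= (1 - eps) * / (2 * a) * N * L.
  apply: floor_nat_le; apply: Rmult_le_pos => //; apply: Rmult_le_pos; try exact: pos_INR.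
  apply: Rmult_le_pos; try lra; apply: Rlt_le; apply: Rinv_0_lt_compat; lra.
set x := a / N.
have hx0 : 0 < x by apply: Rdiv_lt_0_compat.
have hx1 : x <= 1/2.
  rewrite /x hN; apply: (Rmult_le_reg_r (2 * INR n)); first lra.
  field_simplify; lra.
have hxL : x * L <= 1.
  rewrite /x; apply: (Rmult_le_reg_r N) => //.
  have -> : a / N * L * N = a * L by field; lra.
  nra.
have hq : q1 a n = 1 - x by [].
have htx : INR (2 * t) * x <= (1 - eps) * L.
  rewrite mult_INR /x.
  have : 2 * INR t * a <= (1 - eps) * N * L.
    have h2a : 0 <= 2 * a by lra.
    have := Rmult_le_compat_l _ _ _ h2a ht.
    have -> : 2 * a * ((1 - eps) * / (2 * a) * N * L) = (1 - eps) * N * L by field; lra.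
    lra.
  move=> h; apply: (Rmult_le_reg_r N) => //.
  have -> : INR 2 * INR t * (a / N) * N = 2 * INR t * a by rewrite /=; field; lra.
  lra.
have hlnq : - (x * (1 + 2 * x)) <= ln (1 - x).
  apply: ln_ge_of_exp; first lra.
  rewrite exp_Ropp.
  set y := x * (1 + 2 * x).
  have hy := exp_ineq1_le y.
  have hy0 : 0 < exp y by apply: exp_pos.
  have h1 : 1 <= (1 - x) * (1 + y) by rewrite /y; nra.
  have h2 : 1 <= (1 - x) * exp y by nra.
  apply: (Rmult_le_reg_r (exp y)) => //.
  rewrite Rinv_l; lra.
have hexp : - (1 - eps) * L - 2 <= INR (2 * t) * ln (1 - x).
  have h2t : 0 <= INR (2 * t) by apply: pos_INR.
  have := Rmult_le_compat_l _ _ _ h2t hlnq.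
  have : INR (2 * t) * x * (1 + 2 * x) <= (1 - eps) * L * (1 + 2 * x).
    by apply: Rmult_le_compat_r; lra.
  nra.
have hpow : exp (- (1 - eps) * L - 2) <= q1 a n ^ (2 * t).
  rewrite hq -Rpower_pow; last lra.
  rewrite /Rpower.
  case: (Rle_lt_or_eq_dec _ _ hexp) => h; last by rewrite h; lra.
  by apply: Rlt_le; apply: exp_increasing.
have hK : KN eps n * KN eps n = exp (eps * L).
  by rewrite /KN /Rpower -exp_plus -/N -/L; congr exp; field.
have hsplit : exp (- (1 - eps) * L - 2) = exp (eps * L) * / N * / exp 2.
  have -> : - (1 - eps) * L - 2 = eps * L + (- L + - 2) by ring.
  rewrite exp_plus exp_plus !exp_Ropp {2}/L exp_ln // Rmult_assoc.
  reflexivity.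
rewrite hK.
have h9 := exp2_le9.
have hex2 : 0 < exp 2 by apply: exp_pos.
have heL : 0 < exp (eps * L) by apply: exp_pos.
apply: (Rle_trans _ (INR n * exp (- (1 - eps) * L - 2))); last first.
  by apply: Rmult_le_compat_l; lra.
rewrite hsplit hN.
have -> : INR n * (exp (eps * L) * / (2 * INR n) * / exp 2) = exp (eps * L) / (2 * exp 2).
  field; lra.
apply: (Rmult_le_reg_r (18 * (2 * exp 2))); first lra.
field_simplify; try lra.
nra.
Qed.

Lemma KN_pos eps n : 0 < KN eps n.
Proof. rewrite /KN /Rpower; apply: exp_pos. Qed.

Lemma KN_big eps M : 0 < eps ->
  exists n0, (0 < n0)%N /\ forall n, (n0 <= n)%N -> M <= KN eps n.
Proof.
move=> he.
set M' := Rmax M 1.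
have hM1 : 1 <= M' by apply: Rmax_r.
have hMM : M <= M' by apply: Rmax_l.
set y := exp (2 * ln M' / eps).
have [m hm] := INR_archimed 1 y ltac:(lra).
exists m.+1; split => // n hn.
have hy : 0 < y by apply: exp_pos.
have hnm : INR m < INR (2 * n) by apply: lt_INR; apply/ltP; lia.
have h1 : y < INR (2 * n) by lra.
have h2 : ln y < ln (INR (2 * n)) by apply: ln_increasing.
rewrite /y ln_exp in h2.
apply: (Rle_trans _ M') => //.
rewrite /KN /Rpower -{1}(exp_ln M'); last lra.
have : ln M' < eps / 2 * ln (INR (2 * n)).
  apply: (Rmult_lt_reg_l (2 / eps)); first by apply: Rdiv_lt_0_compat; lra.
  have -> : 2 / eps * (eps / 2 * ln (INR (2 * n))) = ln (INR (2 * n)) by field; lra.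
  by rewrite /Rdiv Rmult_assoc (Rmult_comm (/ eps)) -Rmult_assoc.
by move=> h; apply: Rlt_le; apply: exp_increasing.
Qed.

Lemma ratio_bound mu K : 36 <= K -> K * K / 18 <= mu -> mu / ((mu - K) ^ 2) <= 2 / K.
Proof.
move=> hK hmu.
have h2K : 2 * K <= mu by nra.
have hD : 0 < (mu - K) ^ 2 by apply: pow_lt; lra.
have key : mu * K <= 2 * (mu - K) ^ 2 by rewrite /=; nra.
have hKi : 0 < / K by apply: Rinv_0_lt_compat; lra.
have hDi : 0 < / (mu - K) ^ 2 by apply: Rinv_0_lt_compat.
have := Rmult_le_compat_r (/ (mu - K) ^ 2 * / K) _ _ ltac:(nra) key.
have -> : mu * K * (/ (mu - K) ^ 2 * / K) = mu / ((mu - K) ^ 2).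
  field; split; lra.
have -> : 2 * (mu - K) ^ 2 * (/ (mu - K) ^ 2 * / K) = 2 / K.
  field; split; lra.
by [].
Qed.

Theorem mainTheorem2 (a eps : R) (ha0 : 0 < a) (ha1 : a <= 1)
  (he0 : 0 < eps) (he1 : eps < 1) :
  Un_cv (fun n => tv_to_uniform a n (tN a eps n)) 1 /\
  Un_cv (fun n => Pt_AK a (KN eps n) n (tN a eps n)) 1 /\
  Un_cv (fun n => U_AK (KN eps n) n) 0.
Proof.
have bounds : forall n, (0 < n)%N -> 36 <= KN eps n ->
  1 - 2 / KN eps n <= Pt_AK a (KN eps n) n (tN a eps n) <= 1 /\
  0 <= U_AK (KN eps n) n <= / (2 * KN eps n) /\
  Pt_AK a (KN eps n) n (tN a eps n) - U_AK (KN eps n) n <= tv_to_uniform a n (tN a eps n) <= 1.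
  move=> n hn hK.
  have hmu := mu_lower a eps n hn ha0 ha1 he0 he1.
  set K := KN eps n in hK hmu *.
  set mu := INR n * q1 a n ^ (2 * tN a eps n) in hmu.
  have hKmu : K < mu by nra.
  split; last split.
  - split; last exact: Pt_AK_le1.
    have := Pt_AK_lower a n (tN a eps n) K hn ha0 ha1 hKmu.
    have := ratio_bound mu K hK hmu; rewrite -/mu; lra.
  - apply: U_AK_upper => //; lra.
  - split; [exact: tv_lower | exact: tv_upper].
have conv : forall (f : nat -> R) l c, 0 < c ->
    (forall n, (0 < n)%N -> 36 <= KN eps n -> Rabs (f n - l) <= c / KN eps n) ->
    Un_cv f l.
  move=> f l c hc H d hd.
  have [n0 [hn0 Hn0]] := KN_big eps (Rmax 36 (2 * c / d)) he0.
  exists n0 => n hn; rewrite /R_dist.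
  have hn' : (n0 <= n)%N by apply/leP; lia.
  have hKn := Hn0 n hn'.
  have h36 : 36 <= KN eps n by apply: (Rle_trans _ _ _ (Rmax_l _ _) hKn).
  have hcd : 2 * c / d <= KN eps n by apply: (Rle_trans _ _ _ (Rmax_r _ _) hKn).
  have hpos : (0 < n)%N by lia.
  apply: (Rle_lt_trans _ _ _ (H n hpos h36)).
  have hK := KN_pos eps n.
  apply: (Rmult_lt_reg_r (KN eps n)) => //.
  have -> : c / KN eps n * KN eps n = c by field; lra.
  have : 2 * c <= d * KN eps n.
    have := Rmult_le_compat_l d _ _ (Rlt_le _ _ hd) hcd.
    have -> : d * (2 * c / d) = 2 * c by field; lra.
    by [].
  lra.
split; last split.
- apply: (conv _ _ 3) => //; first lra.
  move=> n hn hK; have [[h1 h2] [[h3 h4] [h5 h6]]] := bounds n hn hK.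
  have hKp := KN_pos eps n.
  have e1 : 2 / KN eps n + / (2 * KN eps n) <= 3 / KN eps n.
    apply: (Rmult_le_reg_r (KN eps n)) => //.
    field_simplify; lra.
  unfold Rabs; case: Rcase_abs => hh; lra.
- apply: (conv _ _ 2) => //; first lra.
  move=> n hn hK; have [[h1 h2] _] := bounds n hn hK.
  unfold Rabs; case: Rcase_abs => hh; lra.
- apply: (conv _ _ 1) => //; first lra.
  move=> n hn hK; have [_ [[h3 h4] _]] := bounds n hn hK.
  have hKp := KN_pos eps n.
  have e1 : / (2 * KN eps n) <= 1 / KN eps n.
    apply: (Rmult_le_reg_r (KN eps n)) => //.
    field_simplify; lra.
  unfold Rabs; case: Rcase_abs => hh; lra.
Qed.
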